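(* Consider the P-SSD algorithm described in the context, executed over an arbitrary, possibly time-varying, sequence of digraphs. Then for each agent $i\in\{1,\dots,M\}$: (a) for all $k\in\mathbb{N}_0$, $C_k^i$ is either zero or has full column rank; (b) for all $k\in\mathbb{N}$, $\mathcal{R}(D_k^iE_k^i)=\mathcal{R}(C_k^i)$; (c) for all $k\in\mathbb{N}$, $\mathcal{R}(D(X_i)C_k^i)=\mathcal{R}(D(Y_i)C_k^i)$.
   Context: Data setting: a map $T:\mathcal{M}\to\mathcal{M}$, $\mathcal{M}\subseteq\mathbb{R}^n$; a dictionary $D(x)=[d_1(x),\dots,d_{N_d}(x)]$ of real-valued functions on $\mathcal{M}$; data matrices $X,Y\in\mathbb{R}^{N\times n}$ whose $i$-th rows $x_i^T,y_i^T$ satisfy $y_i=T(x_i)$; $D(X)\in\mathbb{R}^{N\times N_d}$ is the matrix with rows $D(x_1),\dots,D(x_N)$ (similarly $D(Y)$). Assumption: $D(X)$ and $D(Y)$ have full column rank. There are $M$ agents; agent $i$ holds local dictionary snapshots $D(X_i),D(Y_i)$ (obtained from a subset of the snapshot pairs) such that the union over $i$ of the rows of $[D(X_i),D(Y_i)]$ equals the set of rows of $[D(X),D(Y)]$. There are signature matrices $D(X_s),D(Y_s)$ with full column rank such that the rows of $[D(X_s),D(Y_s)]$ are contained in the rows of $[D(X_i),D(Y_i)]$ for every $i$. SSD algorithm: given $A,B\in\mathbb{R}^{m\times q}$, set $A_1=A$, $B_1=B$, $C=I_q$, and iterate: let $[Z^A_j;Z^B_j]$ be a matrix whose columns form a basis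 of the null space of $[A_j,B_j]$ (with $Z^A_j$ having as many rows as $A_j$ has columns); if the null space is trivial return $0$; if the number of rows of $Z^A_j$ is at most its number of columns, return $C$; otherwise set $C\leftarrow CZ^A_j$, $A_{j+1}=A_jZ^A_j$, $B_{j+1}=B_jZ^A_j$. Its output is denoted $\mathrm{SSD}(A,B)$. P-SSD algorithm: at iteration $k\ge1$ the digraph $G_k$ is used; an edge $(j,i)\in E_k$ means $j$ is an in-neighbor of $i$, and $\mathcal{N}_{\mathrm{in}}^k(i)$ denotes the in-neighbors of $i$ in $G_k$. Each agent $i$ sets $C_0^i=I_{N_d}$, $\mathrm{flag}_0^i=0$, and for $k=1,2,\dots$: receives $C_{k-1}^j$ for $j\in\mathcal{N}_{\mathrm{in}}^k(i)$; sets $D_k^i=\mathrm{basis}\big(\bigcap_{j\in\{i\}\cup\mathcal{N}_{\mathrm{in}}^k(i)}\mathcal{R}(C_{k-1}^j)\big)$; sets $E_k^i=\mathrm{SSD}(D(X_i)D_k^i,D(Y_i)D_k^i)$; if the number of columns of $D_k^iE_k^i$ is strictly less than that of $C_{k-1}^i$, sets $C_k^i=D_k^iE_k^i$ and $\mathrm{flag}_k^i=0$; otherwise sets $C_k^i=C_{k-1}^i$ and $\mathrm{flag}_k^i=1$; then transmits $C_k^i$ to its out-neighbors. Here $\mathrm{basis}(\mathcal{A})$ returns a matrix whose columns form a basis of the subspace $\mathcal{A}$, and returns $0$ if $\mathcal{A}=\{0\}$; the matrix $0$ is regarded as having $0$ columns. $\mathcal{R}(\cdot)$ denotes range space. *)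

(* Defs.v *)
(* Column spaces R(A) are represented by row spaces of A^T. *)
From HB Require Import structures.
From mathcomp Require Import all_boot all_order all_algebra.
Set Implicit Arguments.
Unset Strict Implicit.
Unset Printing Implicit Defensive.
Import GRing.Theory.
Local Open Scope ring_scope.

(* A matrix with n rows and an arbitrary (variable) number of columns.
   The "matrix 0 regarded as having 0 columns" is (existT _ 0 0). *)
Definition cmx (R : fieldType) (n : nat) := {c : nat & 'M[R]_(n, c)}.

(* The columns of B (n x c) form a basis of the subspace whose elements are
   (transposes of) the rows of V : 'M_n, i.e. R(B) = V and B has full column rank. *)
Definition is_basis_of (R : fieldType) (n c : nat) (V : 'M[R]_n) (B : 'M[R]_(n, c)) : Prop :=
  (B^T == V)%MS /\ \rank B = c.

Definition range_eq (R : fieldType) (m p q : nat) (A : 'M[R]_(m, p)) (B : 'M[R]_(m, q)) : Prop :=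
  (A^T == B^T)%MS.

(* Null space of K : 'M_(m,p) as a row space: kermx K^T = { u | K *m u^T = 0 }. *)
Definition nullsp (R : fieldType) (m p : nat) (K : 'M[R]_(m, p)) : 'M[R]_p := kermx K^T.

(* Relational description of the SSD algorithm (any choice of null-space bases).
   ssd_from A_j B_j C out : starting from the state (A_j, B_j, C) the algorithm
   may return out.  Z = [Z^A; Z^B] has qj + qj rows; Z^A = usubmx Z. *)
Inductive ssd_from (R : fieldType) (m q : nat) :
    forall qj : nat, 'M[R]_(m, qj) -> 'M[R]_(m, qj) -> 'M[R]_(q, qj) -> cmx R q -> Prop :=
| SSD_zero qj (A B : 'M[R]_(m, qj)) (C : 'M[R]_(q, qj)) (Z : 'M[R]_(qj + qj, 0)) :
    is_basis_of (nullsp (row_mx A B)) Z ->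
    ssd_from A B C (existT (fun c => 'M[R]_(q, c)) 0%N 0)
| SSD_ret qj (A B : 'M[R]_(m, qj)) (C : 'M[R]_(q, qj)) r (Z : 'M[R]_(qj + qj, r)) :
    is_basis_of (nullsp (row_mx A B)) Z -> (0 < r)%N -> (qj <= r)%N ->
    ssd_from A B C (existT (fun c => 'M[R]_(q, c)) qj C)
| SSD_step qj (A B : 'M[R]_(m, qj)) (C : 'M[R]_(q, qj)) r (Z : 'M[R]_(qj + qj, r)) out :
    is_basis_of (nullsp (row_mx A B)) Z -> (0 < r)%N -> (r < qj)%N ->
    ssd_from (A *m usubmx Z) (B *m usubmx Z) (C *m usubmx Z) out ->
    ssd_from A B C out.

Definition ssd (R : fieldType) (m q : nat) (A B : 'M[R]_(m, q)) (out : cmx R q) : Prop :=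
  ssd_from A B (1%:M : 'M[R]_q) out.

(* An execution of P-SSD over the digraph sequence G (G k j i <-> (j,i) in E_k,
   i.e. j is an in-neighbour of i at iteration k), with local dictionary
   snapshots DXl i = D(X_i), DYl i = D(Y_i).  Cm k i = C_k^i, Dm k i = D_k^i,
   Em k i = E_k^i, flag k i = flag_k^i; iteration k.+1 uses G (k.+1). *)
Definition pssd_exec (R : fieldType) (M Nd : nat) (Nl : 'I_M -> nat)
    (DXl DYl : forall i : 'I_M, 'M[R]_(Nl i, Nd)) (G : nat -> rel 'I_M)
    (Cm Dm : nat -> 'I_M -> cmx R Nd)
    (Em : forall (k : nat) (i : 'I_M), cmx R (tag (Dm k i)))
    (flag : nat -> 'I_M -> bool) : Prop :=
  forall i : 'I_M,
    [/\ Cm 0%N i = existT (fun c => 'M[R]_(Nd, c)) Nd 1%:M,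
        flag 0%N i = false &
        forall k : nat,
          [/\ is_basis_of
                (\bigcap_(j | (j == i) || G k.+1 j i) <<(tagged (Cm k j))^T>>)%MS
                (tagged (Dm k.+1 i)),
              ssd (DXl i *m tagged (Dm k.+1 i)) (DYl i *m tagged (Dm k.+1 i)) (Em k.+1 i) &
              if (tag (Em k.+1 i) < tag (Cm k i))%N then
                Cm k.+1 i = existT (fun c => 'M[R]_(Nd, c)) (tag (Em k.+1 i))
                              (tagged (Dm k.+1 i) *m tagged (Em k.+1 i))
                /\ flag k.+1 i = false
              else Cm k.+1 i = Cm k i /\ flag k.+1 i = true]].

Arguments pssd_exec {R M Nd Nl} DXl DYl G Cm Dm Em flag.

(* Main.v *)
Require Import Defs.
From HB Require Import structures.
From mathcomp Require Import all_boot all_order all_algebra.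
From mathcomp Require Import zify.
Import GRing.Theory.
Local Open Scope ring_scope.

Lemma eq_by_rank (F : fieldType) m1 m2 n (A : 'M[F]_(m1,n)) (B : 'M[F]_(m2,n)) :
  (A <= B)%MS -> (\rank B <= \rank A)%N -> (A == B)%MS.
Proof.
move=> sAB lr; have [_ <-] := mxrank_leqif_eq sAB.
by rewrite eqn_leq (mxrankS sAB) lr.
Qed.

Lemma rank_full_mul (F : fieldType) m n p (A : 'M[F]_(m,n)) (B : 'M[F]_(n,p)) :
  \rank A = n -> \rank (A *m B) = \rank B.
Proof. by move=> rA; apply/eqmx_rank/eqmxP/eqmxMfull; rewrite /row_full rA. Qed.

Lemma basis_rank (F : fieldType) n c (V : 'M[F]_n) (Z : 'M[F]_(n,c)) :
  is_basis_of V Z -> \rank Z = c.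
Proof. by case. Qed.

Lemma ssd_inv (F : fieldType) m q qj (A B : 'M[F]_(m,qj)) (C : 'M[F]_(q,qj)) out :
  ssd_from A B C out -> forall (A0 B0 : 'M[F]_(m,q)), A = A0 *m C -> B = B0 *m C ->
  \rank A = qj -> \rank B = qj -> \rank C = qj ->
  \rank (tagged out) = tag out /\ range_eq (A0 *m tagged out) (B0 *m tagged out).
Proof.
elim=> {qj A B C out}.
- move=> qj A B C Z _ A0 B0 _ _ _ _ _ /=.
  split; first by apply/eqP; rewrite -leqn0 rank_leq_col.
  by rewrite /range_eq !mulmx0; apply/eqmxP.
- move=> qj A B C r Z [eZ rZ] r0 qr A0 B0 eA eB rA rB rC /=.
  split=> //; rewrite /range_eq -eA -eB.
  have rk : (\rank (col_mx A^T B^T) <= qj)%N.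
    have := eqmx_rank eZ; rewrite mxrank_tr rZ /nullsp mxrank_ker tr_row_mx.
    move=> h; move: qr; rewrite h.
    have := rank_leq_row (col_mx A^T B^T).
    by lia.
  have h1 : (A^T == col_mx A^T B^T)%MS.
    apply: eq_by_rank; first by rewrite -addsmxE addsmxSl.
    by rewrite mxrank_tr rA.
  have h2 : (B^T == col_mx A^T B^T)%MS.
    apply: eq_by_rank; first by rewrite -addsmxE addsmxSr.
    by rewrite mxrank_tr rB.
  by apply/eqmxP; apply: eqmx_trans (eqmxP h1) (eqmx_sym (eqmxP h2)).
- move=> qj A B C r Z out [eZ rZ] r0 rq _ IH A0 B0 eA eB rA rB rC.
  have kZ : A *m usubmx Z + B *m dsubmx Z = 0.
    rewrite -mul_row_col vsubmxK.
    apply/trmx_inj; rewrite trmx_mul trmx0; apply/sub_kermxP.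
    by rewrite -/(nullsp _) -(eqmxP eZ) submx_refl.
  have rU : \rank (usubmx Z) = r.
    apply/eqP; rewrite eqn_leq rank_leq_col /=.
    have : row_full B by rewrite /row_full rB.
    case/row_fullP=> L hL.
    have eD : dsubmx Z = - (L *m A) *m usubmx Z.
      have : L *m (A *m usubmx Z + B *m dsubmx Z) = 0 by rewrite kZ mulmx0.
      rewrite mulmxDr !mulmxA hL mul1mx => /eqP; rewrite addr_eq0 => /eqP h.
      by rewrite mulNmx h opprK.
    have eZ' : Z = col_mx 1%:M (- (L *m A)) *m usubmx Z.
      by rewrite mul_col_mx mul1mx -eD vsubmxK.
    by have := mxrankM_maxr (col_mx 1%:M (- (L *m A))) (usubmx Z); rewrite -eZ' rZ.
  apply: IH.
  + by rewrite eA mulmxA.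
  + by rewrite eB mulmxA.
  + by rewrite rank_full_mul.
  + by rewrite rank_full_mul.
  + by rewrite rank_full_mul.
Qed.

Theorem theorem4p5 (R : realFieldType) (M N Nd Ns : nat)
    (DX DY : 'M[R]_(N, Nd))
    (Nl : 'I_M -> nat) (DXl DYl : forall i : 'I_M, 'M[R]_(Nl i, Nd))
    (DXs DYs : 'M[R]_(Ns, Nd))
    (G : nat -> rel 'I_M)
    (Cm Dm : nat -> 'I_M -> cmx R Nd)
    (Em : forall (k : nat) (i : 'I_M), cmx R (tag (Dm k i)))
    (flag : nat -> 'I_M -> bool) :
  (* D(X) and D(Y) have full column rank *)
  \rank DX = Nd -> \rank DY = Nd ->
  (* every row of [D(X_i), D(Y_i)] is a row of [D(X), D(Y)] ... *)
  (forall (i : 'I_M) (j : 'I_(Nl i)), exists l : 'I_N,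
      row j (DXl i) = row l DX /\ row j (DYl i) = row l DY) ->
  (* ... and every row of [D(X), D(Y)] is a row of some [D(X_i), D(Y_i)] *)
  (forall l : 'I_N, exists (i : 'I_M) (j : 'I_(Nl i)),
      row j (DXl i) = row l DX /\ row j (DYl i) = row l DY) ->
  (* signature matrices: full column rank, rows contained in every agent's data *)
  \rank DXs = Nd -> \rank DYs = Nd ->
  (forall (i : 'I_M) (j : 'I_Ns), exists l : 'I_(Nl i),
      row j DXs = row l (DXl i) /\ row j DYs = row l (DYl i)) ->
  pssd_exec DXl DYl G Cm Dm Em flag ->
  forall i : 'I_M,
    [/\ (forall k : nat, tagged (Cm k i) = 0 \/ \rank (tagged (Cm k i)) = tag (Cm k i)),
        (forall k : nat, (0 < k)%N ->
           range_eq (tagged (Dm k i) *m tagged (Em k i)) (tagged (Cm k i))) &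
        (forall k : nat, (0 < k)%N ->
           range_eq (DXl i *m tagged (Cm k i)) (DYl i *m tagged (Cm k i)))].
Proof.
move=> _ _ _ _ rXs rYs sig ex i.
have [C0 _ step] := ex i.
have rXl : \rank (DXl i) = Nd.
  apply/eqP; rewrite eqn_leq rank_leq_col -{1}rXs mxrankS //.
  apply/row_subP=> j; have [l [-> _]] := sig i j; exact: row_sub.
have rYl : \rank (DYl i) = Nd.
  apply/eqP; rewrite eqn_leq rank_leq_col -{1}rYs mxrankS //.
  apply/row_subP=> j; have [l [_ ->]] := sig i j; exact: row_sub.
have ssdk : forall k, \rank (tagged (Em k.+1 i)) = tag (Em k.+1 i) /\
    range_eq (DXl i *m tagged (Dm k.+1 i) *m tagged (Em k.+1 i))
             (DYl i *m tagged (Dm k.+1 i) *m tagged (Em k.+1 i)).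
  move=> k; have [[_ rD] hE _] := step k.
  have := @ssd_inv _ _ _ _ _ _ _ _ hE (DXl i *m tagged (Dm k.+1 i)) (DYl i *m tagged (Dm k.+1 i)).
  apply; rewrite ?mulmx1 ?mxrank1 //; by rewrite rank_full_mul.
have rDE : forall k, \rank (tagged (Dm k.+1 i) *m tagged (Em k.+1 i)) = tag (Em k.+1 i).
  move=> k; have [[_ rD] _ _] := step k.
  by rewrite rank_full_mul //; case: (ssdk k).
have ra : forall k, \rank (tagged (Cm k i)) = tag (Cm k i).
  elim=> [|k IH]; first by rewrite C0 /= mxrank1.
  have [_ _] := step k; case: ifP => _ [-> _] //=.
have rb : forall k, range_eq (tagged (Dm k.+1 i) *m tagged (Em k.+1 i)) (tagged (Cm k.+1 i)).
  move=> k; have [[eD rD] _] := step k; case: ifP => lt [eC _]; rewrite eC /=.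
    by rewrite /range_eq; apply/eqmxP.
  rewrite /range_eq; apply: eq_by_rank.
    rewrite trmx_mul; apply: submx_trans (submxMl _ _) _.
    rewrite (eqmxP eD); apply: (bigcapmx_inf i); first by rewrite eqxx.
    by rewrite genmxE.
  by rewrite !mxrank_tr rDE ra leqNgt lt.
split.
- by move=> k; right.
- by case=> [//|k] _.
- case=> [//|k] _; rewrite /range_eq.
  have h1 := eqmxMr (DXl i)^T (eqmxP (rb k)).
  have h2 := eqmxMr (DYl i)^T (eqmxP (rb k)).
  have [_ h3] := ssdk k.
  rewrite -!trmx_mul !mulmxA in h1 h2.
  apply/eqmxP; apply: eqmx_trans (eqmx_sym h1) _.
  apply: eqmx_trans (eqmxP h3) h2.
Qed.
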